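(* For each $1\le n<\omega$, the relation $F_n$ is a $\mathbf{\Pi}^0_{2+n}$ subset of $X_n\times X_n$.
   Context: Let $\mathbb N=\{0,1,2,\dots\}$ and identify $2^{\mathbb N}$ with $\mathcal P(\mathbb N)$. For $1\le m<\omega$ and $x\in((2^{\mathbb N})^{\mathbb N})^m$ define recursively: $A^x_1=\{x(0)(k):k\in\mathbb N\}\subseteq 2^{\mathbb N}$; for $1\le j<m$ and $l\in\mathbb N$, $a^{x,l}_1=\{x(0)(k):x(1)(l)(k)=1\}$ and $a^{x,l}_{j}=\{a^{x,k}_{j-1}:x(j)(l)(k)=1\}$ for $j\ge 2$; and $A^x_{j+1}=\{a^{x,k}_j:k\in\mathbb N\}$ for $1\le j<m$. Let $X_1=(2^{\mathbb N})^{\mathbb N}$, and for $2\le n<\omega$ let $X_n$ be the set of $x\in((2^{\mathbb N})^{\mathbb N})^n$ such that for every $1\le i<n$: (1) for every $m$ there is $k$ with $x(i)(k)(m)=1$; (2) for every $k$ there is $m$ with $x(i)(k)(m)=1$; (3) for all $k,l_1,l_2$, if $x(i-1)(l_1)=x(i-1)(l_2)$ then $x(i)(k)(l_1)=x(i)(k)(l_2)$. $X_n$ has the subspace topology of the product topology. $F_n$ on $X_n$ is $x\mathrel{F_n}y\iff A^x_n=A^y_n$. *)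

(* Defs.v *)
From mathcomp Require Import all_boot.
Unset Printing Implicit Defensive.

(** 2^N (identified with P(N)): bit sequences; (2^N)^N; points of ((2^N)^N)^n
    are maps 'I_n -> (2^N)^N.  x(i)(k)(m) is [co x i k m]. *)
Definition Cantor := nat -> bool.
Definition Elt := nat -> Cantor.
Definition Pt (n : nat) := 'I_n -> Elt.

(** coordinate i of x (meaningful for i < n; junk value otherwise) *)
Definition co {n : nat} (x : Pt n) (i : nat) : Elt :=
  match @insub nat (fun j => j < n) 'I_n i with
  | Some j => x j
  | None => fun _ _ => false
  end.

Fixpoint Lev (j : nat) : Type :=
  match j with 0 => Cantor | S j' => Lev j' -> Prop end.

Fixpoint a {n : nat} (x : Pt n) (j : nat) (l : nat) : Lev j :=
  match j return Lev j with
  | 0 => co x 0 l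
  | S j' => fun s : Lev j' => exists k, co x (S j') l k = true /\ s = a x j' k
  end.

(** A^x_{j+1} = {a^{x,k}_j : k in N}  (with a^{x,k}_0 = x(0)(k), so
    A^x_1 = {x(0)(k) : k}). *)
Definition Aset {n : nat} (x : Pt n) (j : nat) : Lev (S j) :=
  fun s : Lev j => exists k, s = a x j k.

Definition inX {n : nat} (x : Pt n) : Prop :=
  forall i, 1 <= i < n ->
    (forall m, exists k, co x i k m = true) /\
    (forall k, exists m, co x i k m = true) /\
    (forall k l1 l2, co x (i.-1) l1 = co x (i.-1) l2 -> co x i k l1 = co x i k l2).

Definition XX (n : nat) := {p : Pt n * Pt n | inX p.1 /\ inX p.2}.

Definition agree {n : nat} (N : nat) (x y : Pt n) : Prop :=
  forall i : 'I_n, forall k m, k < N -> m < N -> x i k m = y i k m.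

(** Open subsets of X_n x X_n for the subspace topology of the product
    topology (basic neighbourhoods: agreement on finitely many coordinates). *)
Definition openXX (n : nat) (U : XX n -> Prop) : Prop :=
  forall p : XX n, U p -> exists N, forall q : XX n,
    agree N ((proj1_sig p).1) ((proj1_sig q).1) ->
    agree N ((proj1_sig p).2) ((proj1_sig q).2) -> U q.

(** Finite levels of the (boldface) Borel hierarchy on a space with open sets
    [op]: Sigma^0_1 = open; for k >= 2, Sigma^0_k = countable unions of sets
    each in Pi^0_m for some 1 <= m < k; Pi^0_k = complements of Sigma^0_k. *)
Inductive Sigma0 {T : Type} (op : (T -> Prop) -> Prop) : nat -> (T -> Prop) -> Prop :=
| Sigma0_open (U : T -> Prop) : op U -> Sigma0 op 1 U
| Sigma0_union (k : nat) (F : nat -> T -> Prop) (S : T -> Prop) :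
    (forall i, exists m, 1 <= m < k /\ Sigma0 op m (fun t => ~ F i t)) ->
    (forall t, S t <-> exists i, F i t) ->
    Sigma0 op k S.

Definition Pi0 {T : Type} (op : (T -> Prop) -> Prop) (k : nat) (S : T -> Prop) : Prop :=
  Sigma0 op k (fun t => ~ S t).

(** The relation F_n on X_n: x F_n y iff A^x_n = A^y_n. *)
Definition Frel (n : nat) (p : XX n) : Prop :=
  Aset ((proj1_sig p).1) n.-1 = Aset ((proj1_sig p).2) n.-1.

(* Main.v *)
From Stdlib Require Import IndefiniteDescription Bool FunctionalExtensionality PropExtensionality Classical.
Require Import Defs.
From mathcomp Require Import zify.
From mathcomp Require Import all_boot.

Fixpoint G {n : nat} (x y : Pt n) (j k k' : nat) : Prop :=
  match j with
  | 0 => forall m, co x 0 k m = co y 0 k' m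
  | S j' => forall m m', G x y j' m m' -> co x (S j') k m = co y (S j') k' m'
  end.

Definition Both {n : nat} (x y : Pt n) (j : nat) : Prop :=
  (forall k, exists k', G x y j k k') /\ (forall k', exists k, G x y j k k').

Section Logic.
Variable n : nat.

Lemma memb (x : Pt n) (hx : inX x) i l m : i.+1 < n ->
  (forall k k', a x i k = a x i k' -> co x i k = co x i k') ->
  (co x i.+1 l m = true <-> a x i.+1 l (a x i m)).
Proof.
move=> hi hext; split.
- by move=> h; exists m.
- move=> [k [hk e]].
  have [_ [_ h3]] := hx i.+1 (ltac:(lia)).
  by rewrite (h3 l m k (hext _ _ e)).
Qed.

Lemma ext (x : Pt n) (hx : inX x) i : i < n ->
  forall k k', a x i k = a x i k' -> co x i k = co x i k'.
Proof.
elim: i => [|i IH] hi k k' e; first by [].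
apply: functional_extensionality => m; apply/eq_iff_eq_true.
have IH' := IH (ltac:(lia)).
rewrite (memb x hx _ _ _ hi IH') (memb x hx _ _ _ hi IH') e //.
Qed.

Variables x y : Pt n.
Hypothesis hx : inX x.
Hypothesis hy : inX y.

Lemma Gcorrect j : j < n -> (forall i, i < j -> Both x y i) ->
  forall k k', G x y j k k' <-> a x j k = a y j k'.
Proof.
elim: j => [|j IH] hj hB k k'.
- split => [h|h m]; first by apply: functional_extensionality.
  by change (co x 0 k = co y 0 k') in h; rewrite h.
- have IH' := IH (ltac:(lia)) (fun i hi => hB i (ltac:(lia))).
  have [B1 B2] := hB j (ltac:(lia)).
  split => [HG|E].
  + apply: functional_extensionality => s; apply: propositional_extensionality.
    split.
    * move=> [m [hm ->]]. have [m' g] := B1 m. exists m'; split.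
      by rewrite -(HG m m' g). by apply/IH'.
    * move=> [m' [hm ->]]. have [m g] := B2 m'. exists m; split.
      by rewrite (HG m m' g). by symmetry; apply/IH'.
  + move=> m m' g /=. have e := proj1 (IH' m m') g.
    apply/eq_iff_eq_true.
    rewrite (memb x hx _ _ _ hj (ext x hx j (ltac:(lia)))) (memb y hy _ _ _ hj (ext y hy j (ltac:(lia)))).
    rewrite E e //.
Qed.

Lemma Both_Aeq j : j < n -> (forall i, i < j -> Both x y i) ->
  (Both x y j <-> Aset x j = Aset y j).
Proof.
move=> hj hB; have GC := @Gcorrect j hj hB.
split => [[B1 B2]|E].
- apply: functional_extensionality => s; apply: propositional_extensionality.
  split.
  + move=> [k ->]. have [k' g] := B1 k. exists k'. by apply/GC.
  + move=> [k' ->]. have [k g] := B2 k'. exists k. by symmetry; apply/GC.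
- split.
  + move=> k. have : Aset y j (a x j k) by rewrite -E; exists k.
    move=> [k' e]; exists k'; by apply/GC.
  + move=> k'. have : Aset x j (a y j k') by rewrite E; exists k'.
    move=> [k e]; exists k; by apply/GC.
Qed.

Lemma Aeq_down j : j.+1 < n -> Aset x j.+1 = Aset y j.+1 -> Aset x j = Aset y j.
Proof.
move=> hj E.
have [h1x _] := hx j.+1 (ltac:(lia)).
have [h1y _] := hy j.+1 (ltac:(lia)).
apply: functional_extensionality => s; apply: propositional_extensionality.
split.
- move=> [m ->]. have [k hk] := h1x m.
  have : Aset y j.+1 (a x j.+1 k) by rewrite -E; exists k.
  move=> [k' e].
  have : a x j.+1 k (a x j m) by exists m.
  rewrite e => -[m' [_ ->]]; by exists m'.
- move=> [m ->]. have [k hk] := h1y m.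
  have : Aset x j.+1 (a y j.+1 k) by rewrite E; exists k.
  move=> [k' e].
  have : a y j.+1 k (a y j m) by exists m.
  rewrite e => -[m' [_ ->]]; by exists m'.
Qed.

Lemma Frel_iff : 1 <= n -> (Aset x n.-1 = Aset y n.-1 <-> forall j, j < n -> Both x y j).
Proof.
move=> hn; split => [E|H].
- have AE : forall d j, d + j = n.-1 -> Aset x j = Aset y j.
    elim=> [|d IH] j hdj; first by have -> : j = n.-1 by lia.
    apply: Aeq_down; first by lia.
    by apply: IH; lia.
  have : forall J j, j < J -> j < n -> Both x y j.
    elim=> [|J IH] j hjJ hjn; first by lia.
    have hB : forall i, i < j -> Both x y i by move=> i hi; apply: IH; lia.
    apply/(@Both_Aeq j hjn hB).
    by apply: (AE (n.-1 - j)); lia.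
  move=> hh j hj; exact: (hh j.+1 j (ltac:(lia)) hj).
- have hB : forall i, i < n.-1 -> Both x y i by move=> i hi; apply: H; lia.
  apply/(@Both_Aeq n.-1 (ltac:(lia)) hB); apply: H; lia.
Qed.
End Logic.

Set Implicit Arguments.
Section Cx.
Variable n : nat.
Notation Sig := (@Sigma0 (XX n) (openXX n)).
Notation Pi := (@Pi0 (XX n) (openXX n)).

Lemma open_ext (U V : XX n -> Prop) : (forall t, U t <-> V t) -> openXX n U -> openXX n V.
Proof.
move=> e hU p /e /hU [N hN]; exists N => q h1 h2; apply/e; exact: hN.
Qed.

Lemma Sig_ext k (S S' : XX n -> Prop) : (forall t, S t <-> S' t) -> Sig k S -> Sig k S'.
Proof.
move=> e h; case: h e => [U hU|k0 F S0 hF hS] e.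
- apply: Sigma0_open; exact: open_ext hU.
- apply: (Sigma0_union _ _ F) => // t; rewrite -e; exact: hS.
Qed.

Lemma Pi_ext k (S S' : XX n -> Prop) : (forall t, S t <-> S' t) -> Pi k S -> Pi k S'.
Proof.
move=> e; apply: Sig_ext => t; rewrite e; tauto.
Qed.

Lemma Sig_inv k S : Sig k S -> 2 <= k -> exists F : nat -> XX n -> Prop,
  (forall i, exists m, 1 <= m < k /\ Sig m (fun t => ~ F i t)) /\
  (forall t, S t <-> exists i, F i t).
Proof.
case=> [U hU|k0 F S0 hF hS] hk; first by [].
by exists F.
Qed.

Lemma Sig1_open_aux k S : Sig k S -> k = 1 -> openXX n S.
Proof.
case=> [U hU|k0 F S0 hF hS] // hk.
by have [m [hm _]] := hF 0; lia.
Qed.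

Lemma Sig1_open S : Sig 1 S -> openXX n S.
Proof. move=> h; exact: (@Sig1_open_aux 1 S h erefl). Qed.

Lemma Sig_mono k k' S : 2 <= k -> k <= k' -> Sig k S -> Sig k' S.
Proof.
move=> hk hkk h; have [F [hF hS]] := Sig_inv h hk.
apply: (Sigma0_union _ _ F) => // i.
have [m [hm hm']] := hF i; exists m; split => //; lia.
Qed.

Lemma Pi_mono k k' S : 2 <= k -> k <= k' -> Pi k S -> Pi k' S.
Proof. exact: Sig_mono. Qed.

Lemma Sig_false k : 1 <= k -> Sig k (fun _ => False).
Proof.
move=> hk. case: k hk => [|[|k]] hk //.
- by apply: Sigma0_open => p [].
- apply: (Sigma0_union _ _ (fun _ _ => False)); last by move=> t; split => // -[].
  move=> i; exists 1; split; first by lia.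
  apply: Sigma0_open => p _; exists 0 => q _ _; tauto.
Qed.

Lemma Sig_exists k (P : nat -> XX n -> Prop) : 2 <= k -> (forall i, Sig k (P i)) ->
  Sig k (fun t => exists i, P i t).
Proof.
move=> hk hP.
have : forall i, exists F : nat -> XX n -> Prop,
  (forall j, exists m, 1 <= m < k /\ Sig m (fun t => ~ F j t)) /\
  (forall t, P i t <-> exists j, F j t).
  by move=> i; apply: Sig_inv.
move=> /functional_choice [FF hFF].
pose F (idx : nat) : XX n -> Prop :=
  match @unpickle (prod nat nat) idx with
  | Some ij => FF ij.1 ij.2
  | None => fun _ => False
  end.
apply: (Sigma0_union _ _ F).
- move=> idx; rewrite /F; case: (unpickle idx) => [[i j]|] /=.
  + exact: (proj1 (hFF i) j).
  + exists 1; split; first by lia.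
    apply: Sigma0_open => p _; exists 0 => q _ _; tauto.
- move=> t; split.
  + move=> [i /(proj2 (hFF i)) [j hj]].
    exists (pickle (i, j)); by rewrite /F pickleK.
  + move=> [idx]; rewrite /F; case: (unpickle idx) => [[i j]|] //= h.
    exists i; apply/(proj2 (hFF i)); by exists j.
Qed.

Lemma Sig_or k A B : 1 <= k -> Sig k A -> Sig k B -> Sig k (fun t => A t \/ B t).
Proof.
move=> hk hA hB.
case: k hk hA hB => [|[|k]] hk hA hB //.
- apply: Sigma0_open => p hp.
  have oA := Sig1_open hA; have oB := Sig1_open hB.
  case: hp => [/oA|/oB] [N hN]; exists N => q h1 h2; [left|right]; exact: hN.
- apply: (@Sig_ext _ (fun t => exists i, (if i is 0 then A else B) t)).
  + move=> t; split; first by case=> -[|i] h; [left|right].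
    by case=> h; [exists 0|exists 1].
  + apply: Sig_exists => // -[|i] //.
Qed.

Lemma Pi_and k A B : 1 <= k -> Pi k A -> Pi k B -> Pi k (fun t => A t /\ B t).
Proof.
move=> hk hA hB; apply: (@Sig_ext _ (fun t => ~ A t \/ ~ B t)).
- move=> t; tauto.
- exact: Sig_or.
Qed.

Lemma Pi_forall k (P : nat -> XX n -> Prop) : 2 <= k -> (forall i, Pi k (P i)) ->
  Pi k (fun t => forall i, P i t).
Proof.
move=> hk hP; apply: (@Sig_ext _ (fun t => exists i, ~ P i t)).
- move=> t; split; first by move=> [i hi] h; apply: hi.
  move=> h; apply: NNPP => h'; apply: h => i; apply: NNPP => hi; apply: h'; by exists i.
- exact: Sig_exists.
Qed.

Lemma Sig_of_Pi k P : 1 <= k -> Pi k P -> Sig k.+1 P.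
Proof.
move=> hk hP; apply: (Sigma0_union _ _ (fun _ => P)); last by move=> t; split => // -[].
move=> i; exists k; split => //; lia.
Qed.

Lemma Pi_of_Sig k P : 1 <= k -> Sig k P -> Pi k.+1 P.
Proof.
move=> hk hP; apply: Sig_of_Pi => //.
apply: Sig_ext hP => t; tauto.
Qed.

Definition CL (S : XX n -> Prop) := exists N, forall p q : XX n,
  agree N (proj1_sig p).1 (proj1_sig q).1 -> agree N (proj1_sig p).2 (proj1_sig q).2 ->
  (S p <-> S q).

Lemma CL_open S : CL S -> openXX n S.
Proof. move=> [N hN] p hp; exists N => q h1 h2; exact/(hN p q h1 h2). Qed.

Lemma CL_neg S : CL S -> CL (fun t => ~ S t).
Proof. move=> [N hN]; exists N => p q h1 h2; have := hN p q h1 h2; tauto. Qed.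

Lemma CL_Sig k S : 1 <= k -> CL S -> Sig k S.
Proof.
move=> hk hS; case: k hk => [|[|k]] hk //.
- apply: Sigma0_open; exact: CL_open.
- apply: (Sigma0_union _ _ (fun _ => S)); last by move=> t; split => // -[].
  move=> i; exists 1; split; first by lia.
  apply: Sigma0_open; apply: CL_open; exact: CL_neg.
Qed.

Lemma CL_Pi k S : 1 <= k -> CL S -> Pi k S.
Proof. move=> hk hS; apply: CL_Sig => //; exact: CL_neg. Qed.

Lemma co_agree N (x y : Pt n) i k m : agree N x y -> k < N -> m < N -> co x i k m = co y i k m.
Proof.
move=> h hk hm; rewrite /co; case: insub => [j|] //; exact: h.
Qed.

Lemma CL_coeq i k m i' k' m' :
  CL (fun p : XX n => co (proj1_sig p).1 i k m = co (proj1_sig p).2 i' k' m').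
Proof.
exists (maxn (maxn k m) (maxn k' m')).+1 => p q h1 h2.
rewrite (co_agree i k m h1); try lia.
rewrite (co_agree i' k' m' h2); try lia.
all: by [].
Qed.

Definition Gset j k k' : XX n -> Prop := fun p => G (proj1_sig p).1 (proj1_sig p).2 j k k'.

Lemma Gset_Pi j : forall k k', Pi j.+1 (Gset j k k').
Proof.
elim: j => [|j IH] k k'.
- apply: Sigma0_open => p hp.
  have [m hm] : exists m, co (proj1_sig p).1 0 k m <> co (proj1_sig p).2 0 k' m.
    apply: NNPP => h; apply: hp => m; apply: NNPP => h'; apply: h; by exists m.
  have [N hN] := CL_coeq 0 k m 0 k' m.
  exists N => q h1 h2 hq; apply: hm; apply/(hN p q h1 h2); exact: hq.
- apply: (@Sig_ext _ (fun p => exists m, exists m',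
     Gset j m m' p /\ ~ (co (proj1_sig p).1 j.+1 k m = co (proj1_sig p).2 j.+1 k' m'))).
  + move=> p; rewrite /Gset /=; split.
    * move=> [m [m' [g ne]]] h; apply: ne; exact: h.
    * move=> h; apply: NNPP => h'; apply: h => m m' g; apply: NNPP => ne.
      apply: h'; by exists m, m'.
  + apply: Sig_exists => // m; apply: Sig_exists => // m'.
    apply: Sig_of_Pi => //; apply: Pi_and => //; idtac.
    apply: CL_Pi => //; apply: CL_neg; exact: CL_coeq.
Qed.

Lemma Both_Pi j : Pi j.+3 (fun p : XX n => Both (proj1_sig p).1 (proj1_sig p).2 j).
Proof.
apply: Pi_and => //.
- apply: (@Pi_forall _ (fun k p => exists k', Gset j k k' p)) => // k.
  apply: Pi_of_Sig => //; apply: Sig_exists => // k'; apply: Sig_of_Pi => //; exact: Gset_Pi.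
- apply: (@Pi_forall _ (fun k' p => exists k, Gset j k k' p)) => // k'.
  apply: Pi_of_Sig => //; apply: Sig_exists => // k; apply: Sig_of_Pi => //; exact: Gset_Pi.
Qed.
End Cx.

Theorem proposition1p16 : forall n : nat, 1 <= n -> Pi0 (@openXX n) (2 + n) (@Frel n).
Proof.
move=> n hn.
apply: (@Pi_ext n _ (fun p : XX n => forall j, j < n -> Both (proj1_sig p).1 (proj1_sig p).2 j)).
- move=> p; rewrite /Frel; case: p => [[x y] [hx hy]] /=.
  by rewrite (@Frel_iff n x y hx hy hn).
- apply: Pi_forall => // j.
  case: (ltnP j n) => hj.
  + apply: (@Pi_ext n _ (fun p : XX n => Both (proj1_sig p).1 (proj1_sig p).2 j)).
      by move=> p; split => [h _|h]; [|apply: h].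
    apply: (@Pi_mono n j.+3 (2 + n)); [lia|lia|].
    exact: Both_Pi.
  + apply: (@Pi_ext n _ (fun _ => True)).
      by move=> p; split => // _ h; lia.
    apply: CL_Pi; first lia.
    by exists 0.
Qed.
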